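(* For integers $n\ge0$ and $k\ge0$ define $$F(n,k)=(-1)^k(4n+1)\frac{(\frac12)_n^3(\frac12)_{n+k}}{(1)_n^3\,(1)_{n-k}\,(\frac12)_k^2},\qquad G(n,k)=(-1)^{k-1}\frac{4(\frac12)_n^3(\frac12)_{n+k-1}}{(1)_{n-1}^3\,(1)_{n-k}\,(\frac12)_k^2},$$ with the convention $1/(1)_j=0$ for negative integers $j$ (so $F(n,k)=0$ for $k>n$ and $G(0,k)=0$ for $k>0$). Then for every $n\in\mathbb N$ and every positive integer $k$, $$(2k-1)F(n,k-1)-2kF(n,k)=G(n+1,k)-G(n,k),$$ and for every $m\in\mathbb N$, $$\sum_{n=0}^{m}F(n,0)=\frac{4^m}{\binom{2m}{m}}F(m,m)+\sum_{k=1}^m\frac{4^{k-1}\,G(m+1,k)}{(2k-1)\binom{2k-2}{k-1}}.$$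
   Context: $(x)_k=x(x+1)\cdots(x+k-1)$ is the Pochhammer symbol, with $(x)_0=1$; $(1)_j=j!$ for $j\ge0$. *)

(* Defs.v *)
From mathcomp Require Import all_boot all_order all_algebra.
Set Implicit Arguments. Unset Strict Implicit. Unset Printing Implicit Defensive.
Import Order.TTheory GRing.Theory Num.Theory.
Local Open Scope ring_scope.

Definition poch (x : rat) (k : nat) : rat := \prod_(i < k) (x + i%:R).

Definition invpoch1 (j : int) : rat :=
  match j with
  | Posz m => (poch 1 m)^-1
  | Negz _ => 0
  end.

Definition F (n k : nat) : rat :=
  (-1) ^+ k * (4 * n%:R + 1) * poch (1/2) n ^+ 3 * poch (1/2) (n + k)
  * invpoch1 (n%:Z) ^+ 3 * invpoch1 (n%:Z - k%:Z) / poch (1/2) k ^+ 2.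

(* The index n+k-1 is only negative for n = k = 0, where the factor
   1/(1)_{-1}^3 = 0 makes G vanish anyway; we use truncated n+k-1 there. *)
Definition G (n k : nat) : rat :=
  (-1) ^ (k%:Z - 1) * 4 * poch (1/2) n ^+ 3 * poch (1/2) (n + k).-1
  * invpoch1 (n%:Z - 1) ^+ 3 * invpoch1 (n%:Z - k%:Z) / poch (1/2) k ^+ 2.

(* Main.v *)
Require Import Defs.
From mathcomp Require Import all_boot all_order all_algebra.
From mathcomp Require Import zify ring lra.
Import Order.TTheory GRing.Theory Num.Theory.
Local Open Scope ring_scope.

Lemma pochS x n : poch x n.+1 = poch x n * (x + n%:R).
Proof. by rewrite /poch big_ord_recr. Qed.

Lemma poch_h_neq0 n : poch (1/2) n != 0.
Proof. apply: lt0r_neq0; apply: prodr_gt0 => i _; have := ler0n rat i; lra. Qed.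
Lemma poch_1_neq0 n : poch 1 n != 0.
Proof. apply: lt0r_neq0; apply: prodr_gt0 => i _; have := ler0n rat i; lra. Qed.

Lemma ip_nat z m : z = Posz m -> invpoch1 z = (poch 1 m)^-1.
Proof. by move->. Qed.
Lemma ip_neg z : z < 0 -> invpoch1 z = 0.
Proof. by case: z. Qed.
Lemma expz_nat (x : rat) n : x ^ (Posz n) = x ^+ n.
Proof. by []. Qed.

Lemma part1 n j : (2 * (j.+1)%:R - 1) * F n j - 2 * (j.+1)%:R * F n j.+1
   = G n.+1 j.+1 - G n j.+1.
Proof.
rewrite /F /G.
have -> : (Posz j.+1 - 1) = Posz j by lia.
rewrite expz_nat.
have [lt|gt|eq] := ltngtP j n.
- have [d ->] : exists d, n = (j+d).+1 by exists (n - j.+1)%N; lia.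
  rewrite (@ip_nat (Posz (j+d).+1 - Posz j) d.+1); last by lia.
  rewrite (@ip_nat (Posz (j+d).+1 - Posz j.+1) d); last by lia.
  rewrite (@ip_nat (Posz (j+d).+2 - 1) (j+d).+1); last by lia.
  rewrite (@ip_nat (Posz (j+d).+2 - Posz j.+1) d.+1); last by lia.
  rewrite (@ip_nat (Posz (j+d).+1 - 1) (j+d)); last by lia.
  idtac.
  rewrite !(addSn, addnS) /= !pochS [(-1)^+j.+1]exprS.
  have h1 := poch_h_neq0 j. have h2 := poch_h_neq0 (j+d). have h3 := poch_h_neq0 (j+d+j).
  have h4 := poch_1_neq0 d. have h5 := poch_1_neq0 (j+d).
  field; have hx := ler0n rat j; have hy := ler0n rat d.
  by repeat (apply/andP; split); rewrite ?h1 ?h2 ?h3 ?h4 ?h5 //; apply: lt0r_neq0; lra.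
- rewrite (@ip_neg (Posz n - Posz j)); last by lia.
  rewrite (@ip_neg (Posz n - Posz j.+1)); last by lia.
  rewrite (@ip_neg (Posz n.+1 - Posz j.+1)); last by lia.
  ring.
- subst j.
  rewrite (@ip_neg (Posz n - Posz n.+1)); last by lia.
  rewrite (@ip_nat (Posz n - Posz n) 0); last by lia.
  rewrite (@ip_nat (Posz n.+1 - 1) n); last by lia.
  rewrite (@ip_nat (Posz n.+1 - Posz n.+1) 0); last by lia.
  rewrite !(addSn, addnS) /= !pochS [(-1)^+n.+1]exprS.
  have h1 := poch_h_neq0 n. have h3 := poch_h_neq0 (n+n).
  have h5 := poch_1_neq0 n.
  field; have hx := ler0n rat n.
  by have h0 := poch_1_neq0 0; repeat (apply/andP; split); rewrite ?h0 ?h1 ?h3 ?h5 //; apply: lt0r_neq0; lra.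
Qed.

Definition u (j : nat) : rat := 4 ^+ j / ('C(2 * j, j))%:R.
Definition w (k : nat) : rat := 4 ^+ k.-1 / ((2 * k%:R - 1) * ('C(2 * k - 2, k.-1))%:R).

Lemma binC_neq0 j : ('C(2 * j, j))%:R != 0 :> rat.
Proof. by rewrite pnatr_eq0 -lt0n bin_gt0; lia. Qed.

Lemma wu1 j : w j.+1 * (2 * j.+1%:R - 1) = u j.
Proof.
rewrite /w /u /=. have -> : (2 * j.+1 - 2 = 2 * j)%N by lia.
have h := binC_neq0 j. have hx := ler0n rat j.
field. by rewrite h /=; apply: lt0r_neq0; lra.
Qed.

Lemma wu2 j : w j.+1 * (2 * j.+1%:R) = u j.+1.
Proof.
have hn : (j.+1 * 'C(2 * j.+1, j.+1) = 2 * (2 * j).+1 * 'C(2 * j, j))%N.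
  have e1 := mul_bin_diag (2 * j).+2 j.
  have e2 := mul_bin_diag (2 * j).+1 j.
  have e3 := mul_bin_left (2 * j).+1 j.
  have -> : (2 * j.+1 = (2 * j).+2)%N by lia.
  simpl in e1, e2, e3. rewrite (_ : ((2 * j).+1 - j = j.+1)%N) in e3; last by lia.
  nia.
have hc : ('C(2 * j.+1, j.+1))%:R = 2 * (2 * j%:R + 1) * ('C(2 * j, j))%:R / (j.+1)%:R :> rat.
  have hj : (j.+1)%:R != 0 :> rat by rewrite pnatr_eq0.
  have := congr1 (fun m => m%:R : rat) hn; rewrite /= !natrM => Hc.
  rewrite -[LHS](mulKf hj) Hc; ring.
rewrite /w /u hc /=. have -> : (2 * j.+1 - 2 = 2 * j)%N by lia.
have h := binC_neq0 j. have hx := ler0n rat j.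
rewrite exprS; field.
by rewrite h /=; apply/andP; split; apply: lt0r_neq0; lra.
Qed.

Lemma tel n K : F n 0 - u K * F n K = \sum_(1 <= k < K.+1) w k * (G n.+1 k - G n k).
Proof.
elim: K => [|K IH].
  by rewrite big_geq // /u /= bin0 expr0 divr1 mul1r subrr.
rewrite big_nat_recr //= -IH -part1 -(wu2 K) -(wu1 K); ring.
Qed.

Lemma F_zero n m : (n < m)%N -> F n m = 0.
Proof. move=> h; rewrite /F (@ip_neg (Posz n - Posz m)); last by lia. ring. Qed.

Lemma G_zero k : G 0 k = 0.
Proof. rewrite /G (@ip_neg (Posz 0 - 1)) //. ring. Qed.


Theorem mainTheorem12 :
  (forall n k : nat, (0 < k)%N ->
     (2 * k%:R - 1) * F n k.-1 - 2 * k%:R * F n k = G n.+1 k - G n k)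
  /\
  (forall m : nat,
     \sum_(0 <= n < m.+1) F n 0 =
       4 ^+ m / ('C(2 * m, m))%:R * F m m
       + \sum_(1 <= k < m.+1)
           4 ^+ k.-1 * G m.+1 k / ((2 * k%:R - 1) * ('C(2 * k - 2, k.-1))%:R)).
Proof.
split.
  by move=> n [|k] // _; rewrite part1.
move=> m.
have -> : \sum_(0 <= n < m.+1) F n 0 = \sum_(0 <= n < m.+1)
   (u m * F n m + \sum_(1 <= k < m.+1) w k * (G n.+1 k - G n k)).
  by apply: eq_bigr => n _; rewrite -tel; ring.
rewrite big_split /= -mulr_sumr big_nat_recr //= big1_seq ?add0r; last first.
  by move=> n; rewrite mem_index_iota => /andP [_ h]; rewrite F_zero.
rewrite exchange_big_nat /=; congr (_ + _).
apply: eq_bigr => k _.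
by rewrite -mulr_sumr telescope_sumr // G_zero subr0 /w mulrAC.
Qed.
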